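(* Let $\mathcal{X}$ be countable and $\mathcal{H}\subseteq\{0,1\}^{\mathcal{X}}$ a class with $\mathtt{RepDim}(\mathcal{H})<\infty$. Then $\mathtt{CD}^\star(\mathcal{H})<\infty$.
   Context: A dataset of size $m$ is $S=((x_1,y_1),\dots,(x_m,y_m))\in(\mathcal{X}\times\{0,1\})^m$; it is $\mathcal{H}$-realizable if some $h\in\mathcal{H}$ satisfies $h(x_i)=y_i$ for all $i$. $G_m(\mathcal{H})$ is the graph on realizable datasets of size $m$ with $S,S'$ adjacent iff there is $x$ with $(x,0)$ appearing in $S$ and $(x,1)$ appearing in $S'$. A fractional clique of a graph $G=(V,E)$ is $\delta:V\to[0,\infty)$ with $\sum_{v\in I}\delta(v)\le1$ for every independent set $I$; $\omega^\star_m$ is the supremum of $\sum_v\delta(v)$ over fractional cliques of $G_m(\mathcal{H})$; $\mathtt{CD}^\star(\mathcal{H})=\sup\{m:\omega^\star_m=2^m\}$. For a distribution $\mathcal{D}$ on $\mathcal{X}\times\{0,1\}$, $L_{\mathcal{D}}(h)=\Pr_{(x,y)\sim\mathcal{D}}[h(x)\neq y]$, and $\mathcal{D}$ is realizable if $\inf_{h\in\mathcal{H}}L_{\mathcal{D}}(h)=0$. The representation dimension $\mathtt{RepDim}(\mathcal{H})$ is $\ln k$, where $k$ is the minimal integer for which there is a probability distribution $\mathcal{P}$ over hypothesis classes $\mathcal{C}\subseteq\{0,1\}^{\mathcal{X}}$ of size $k$ such that for every realizable $\mathcal{D}$, $\Pr_{\mathcal{C}\sim\mathcal{P}}[\exists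 h\in\mathcal{C}: L_{\mathcal{D}}(h)\le 1/4]\ge 3/4$ (and $\infty$ if no such $k$ exists). *)

(* Defs.v *)
From HB Require Import structures.
From mathcomp Require Import all_boot all_order all_algebra.
From mathcomp Require Import all_classical all_reals all_analysis.
Set Implicit Arguments. Unset Strict Implicit. Unset Printing Implicit Defensive.
Import Order.TTheory GRing.Theory Num.Theory.
Local Open Scope classical_set_scope.
Local Open Scope ring_scope.
Local Open Scope ereal_scope.

Section Defs.
Variables (R : realType) (X : countType).

Definition dataset (m : nat) := m.-tuple (X * bool).

Definition realizable_ds (H : set (X -> bool)) m (S : dataset m) : Prop :=
  exists2 h, H h & forall i : 'I_m, h (tnth S i).1 = (tnth S i).2.

Definition conflict m (S S' : dataset m) : Prop :=
  exists x : X, ((x, false) \in S) /\ ((x, true) \in S').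

Definition adjacent m (S S' : dataset m) : Prop := conflict S S' \/ conflict S' S.

Definition independent (H : set (X -> bool)) m (I : set (dataset m)) : Prop :=
  I `<=` realizable_ds H (m:=m) /\
  forall S S', I S -> I S' -> ~ adjacent S S'.

Definition fractional_clique (H : set (X -> bool)) m (delta : dataset m -> R) : Prop :=
  (forall S, realizable_ds H S -> (0 <= delta S)%R) /\
  forall I, independent H I -> \esum_(S in I) (delta S)%:E <= 1.

Definition omega_star (H : set (X -> bool)) (m : nat) : \bar R :=
  ereal_sup [set \esum_(S in realizable_ds H (m:=m)) (delta S)%:E
            | delta in fractional_clique H (m:=m)].

(* CD*(H) < oo : the set {m | omega*_m = 2^m} is bounded above *)
Definition CDstar_finite (H : set (X -> bool)) : Prop :=
  exists N : nat, forall m : nat, omega_star H m = ((2%:R : R) ^+ m)%:E -> (m <= N)%N.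

(* Since X is countable, a (discrete) probability distribution on X x {0,1}
   is given by its probability mass function. *)
Definition pmf (p : X * bool -> R) : Prop :=
  (forall z, (0 <= p z)%R) /\ \esum_(z in [set: X * bool]) (p z)%:E = 1.

Definition loss (p : X * bool -> R) (h : X -> bool) : \bar R :=
  \esum_(z in [set z : X * bool | h z.1 != z.2]) (p z)%:E.

Definition realizable_distr (H : set (X -> bool)) (p : X * bool -> R) : Prop :=
  pmf p /\ ereal_inf [set loss p h | h in H] = 0.

(* There is k and a probability distribution over hypothesis classes of size
   (at most) k -- modelled as a random k-indexed family of hypotheses on an
   arbitrary probability space -- such that for every realizable D, with
   (inner) probability >= 3/4 the class contains h with L_D(h) <= 1/4. *)
Definition RepDim_finite (H : set (X -> bool)) : Prop :=
  exists (k : nat) (d : measure_display) (Omega : measurableType d)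
         (P : probability Omega R) (C : Omega -> 'I_k -> (X -> bool)),
    forall p, realizable_distr H p ->
      exists A : set Omega,
        [/\ measurable A,
            A `<=` [set w | exists i : 'I_k, loss p (C w i) <= (1/4)%:E]
          & (3/4)%:E <= P A].

End Defs.

(* Main.v *)
Require Import Defs.
From mathcomp Require Import all_boot all_order all_algebra.
From mathcomp Require Import all_classical all_reals all_analysis.
From mathcomp Require Import measurable_realfun lebesgue_integral.
From mathcomp Require Import ring lra zify.
Set Implicit Arguments. Unset Strict Implicit. Unset Printing Implicit Defensive.
Import Order.TTheory GRing.Theory Num.Theory.
Local Open Scope classical_set_scope.
Local Open Scope ring_scope.

Lemma sum_count_mem (T : eqType) (Z S : seq T) (e : pred T) : uniq Z ->
  (forall z, z \in Z -> e z) -> (forall z, z \in S -> e z -> z \in Z) ->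
  (\sum_(z <- Z) count_mem z S = count e S)%N.
Proof.
move=> uZ ZE; elim: S => [|x S IH] SZ /=; first by rewrite big1.
rewrite big_split /= IH; last by move=> z zS; apply: SZ; rewrite inE zS orbT.
congr (_ + _).
have -> : (\sum_(z <- Z) (x == z) = count_mem x Z)%N.
  rewrite -sum1_count [RHS]big_mkcond /=; apply: eq_bigr => z _.
  by rewrite eq_sym; case: (_ == _).
rewrite count_uniq_mem //.
suff -> : (x \in Z) = e x by [].
case: (boolP (e x)) => ex; first by rewrite SZ // inE eqxx.
by apply/negbTE; apply: contra ex; exact: ZE.
Qed.


Lemma avg_bound (R : realType) (d : measure_display) (T : measurableType d)
  (P : probability T R) (I : Type) (s : seq I) (c : I -> R) (A : I -> set T) (K : R) :
  (forall i, 0 <= c i) -> (forall i, measurable (A i)) ->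
  (forall w, \sum_(i <- s) c i * \1_(A i) w <= K) ->
  (\sum_(i <- s) (c i)%:E * P (A i) <= K%:E)%E.
Proof.
move=> c0 mA HK.
have mf : forall i, measurable_fun (setT : set T) (fun x : T => ((c i)%:E * (\1_(A i) x)%:E : \bar R)%E).
  move=> i; apply: measurable_funeM; apply/measurable_EFinP.
  exact: measurable_indic.
have f0 : forall i x, setT x -> (0 <= (c i)%:E * (\1_(A i) x)%:E)%E.
  by move=> i x _; rewrite mule_ge0 // lee_fin.
have -> : (\sum_(i <- s) (c i)%:E * P (A i) =
   \sum_(i <- s) \int[P]_(x in setT) ((c i)%:E * (\1_(A i) x)%:E))%E.
  apply: eq_bigr => i _.
  have mi : measurable_fun (setT : set T) (fun x : T => (\1_(A i) x)%:E : \bar R).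
    by apply/measurable_EFinP; exact: measurable_indic.
  rewrite (ge0_integralZl P measurableT mi); last by rewrite lee_fin.
    by rewrite integral_indic // setIT.
  by move=> x _; rewrite lee_fin.
rewrite -(@ge0_integral_sum _ _ _ P setT measurableT _ _ mf f0).
apply: (@le_trans _ _ (\int[P]_(x in setT) (cst K%:E) x)%E).
  apply: ge0_le_integral => //.
  - by move=> x _; apply: sume_ge0 => i _; exact: f0.
  - exact: emeasurable_sum.
  - move=> x _ /=.
    rewrite (eq_bigr (fun i => (c i * \1_(A i) x)%:E)); last by move=> i _; rewrite EFinM.
    by rewrite sumEFin lee_fin.
rewrite integral_cst //. 
rewrite [X in (_ * X)%E](_ : _ = 1%E) ?mule1 //.
exact: probability_setT.
Qed.

Lemma esum_le_seq (R : realType) (T : choiceType) (D : set T) (f : T -> R) (B : R) :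
  (forall r, uniq r -> (forall x, x \in r -> D x) -> \sum_(x <- r) f x <= B) ->
  (\esum_(x in D) (f x)%:E <= B%:E)%E.
Proof.
move=> H; apply: ge_ereal_sup => _ [F [finF FD] <-].
rewrite fsbig_finite //= sumEFin lee_fin; apply: H; first exact: finmap.fset_uniq.
by move=> x; rewrite in_fset_set // => /set_mem; exact: FD.
Qed.


Local Open Scope nat_scope.
Lemma h27 n : (n.+1 * 16 ^ n <= 2 * 27 ^ n)%N.
Proof.
elim: n => [|n IH] //.
case: n IH => [|n] IH //.
rewrite (expnS 16 n.+1) (expnS 27 n.+1).
set A := 16 ^ n.+1 in IH *; set B := 27 ^ n.+1 in IH *.
have h1 : (27 * (n.+2 * A) <= 27 * (2 * B))%N by rewrite leq_mul2l IH orbT.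
have h2 : (n.+2 * (16 * A) <= 27 * (n.+2 * A))%N.
  rewrite mulnCA leq_mul2r; apply/orP; right; lia.
nia.
Qed.

Lemma arith k m : (7 * k ^ 4 < m)%N -> (4 * k * 2 ^ m < 3 ^ (m - m %/ 4 + 1))%N.
Proof.
move=> hm.
rewrite -(@ltn_exp2r _ _ 4) //.
set a := m - m %/ 4.
have ha : (3 * m + 4 <= (a + 1) * 4)%N.
  have := leq_trunc_div m 4; rewrite /a; lia.
apply: (@leq_trans (3 ^ (3 * m + 4))); last by rewrite -expnM leq_pexp2l.
have e2 : 3 ^ (3 * m + 4) = 81 * 27 ^ m by rewrite expnD expnM mulnC.
rewrite e2.
have e1 : (4 * k * 2 ^ m) ^ 4 = 256 * k ^ 4 * 16 ^ m.
  rewrite !expnMn -expnM.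
  by rewrite (mulnC m 4) expnM.
rewrite e1.
have := h27 m.
have p : (0 < 16 ^ m)%N by rewrite expn_gt0.
set X := 16 ^ m; set Y := 27 ^ m; set K := k ^ 4 in hm *.
move=> h.
have h3 : (512 * K * X < 81 * m.+1 * X)%N by rewrite ltn_pmul2r //; lia.
lia.
Qed.

Local Open Scope ring_scope.
Section Core.
Variables (R : realType) (X : countType) (H : set (X -> bool)) (m : nat).

Definition wt (b : bool) : R := if b then 1/4 else 3/4.
Definition errb (h : X -> bool) (z : X * bool) : bool := h z.1 != z.2.
Definition qh (h : X -> bool) (S : dataset X m) : R := \prod_(z <- S) wt (errb h z).
Definition consb (g : X -> bool) (S : dataset X m) : bool := all (fun z => g z.1 == z.2) S.

Lemma wt_ge0 b : 0 <= wt b. Proof. case: b; rewrite /wt; lra. Qed.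
Lemma wt_le1 b : wt b <= 1.
Proof. case: b; rewrite /wt; lra. Qed.
Lemma wt_sum : wt true + wt false = 1.
Proof. rewrite /wt; lra. Qed.

Lemma realizable_seq (S : dataset X m) : realizable_ds H S ->
  exists2 h', H h' & forall z, z \in S -> h' z.1 = z.2.
Proof.
move=> [h' Hh' hS]; exists h' => // z /tnthP [i ->]; exact: hS.
Qed.


Definition gf (Y : seq X) (h : X -> bool) (f : {ffun seq_sub Y -> bool}) (x : X) : bool :=
  if (insub x : option (seq_sub Y)) is Some y then h x (+) f y else h x.

Definition okb (Y : seq X) (h : X -> bool) (S : dataset X m) (y : seq_sub Y) (b : bool) :=
  all (fun z => (z.1 == val y) ==> (h z.1 (+) b == z.2)) S.

Definition Gy (Y : seq X) (h : X -> bool) (S : dataset X m) (y : seq_sub Y) (b : bool) : R :=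
  if okb h S y b then wt b else 0.

Lemma gf_in (Y : seq X) h (f : {ffun seq_sub Y -> bool}) (y : seq_sub Y) :
  gf h f (val y) = h (val y) (+) f y.
Proof. by rewrite /gf valK. Qed.

Lemma prodG (Y : seq X) (h : X -> bool) (S : dataset X m)
  (SY : forall z, z \in S -> z.1 \in Y) (f : {ffun seq_sub Y -> bool}) :
  \prod_y Gy h S y (f y) = (\prod_y wt (f y)) * (consb (gf h f) S)%:R.
Proof.
have [c|nc] := boolP (consb (gf h f) S).
  rewrite mulr1; apply: eq_bigr => y _; rewrite /Gy.
  suff -> : okb h S y (f y) by [].
  apply/allP => z zS; apply/implyP => /eqP z1.
  move/allP: c => /(_ z zS) /eqP <-.
  by rewrite z1 gf_in.
rewrite mulr0; move: nc => /allPn [z zS nz].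
have zY := SY z zS.
pose y : seq_sub Y := SeqSub zY.
rewrite (bigD1 y) //= /Gy.
suff -> : okb h S y (f y) = false by rewrite mul0r.
apply/negbTE/allPn; exists z => //; rewrite eqxx /=.
by rewrite -[z.1]/(val y) -gf_in.
Qed.


Lemma factor_bound (Y : seq X) (h h' : X -> bool) (S : dataset X m)
  (hS : forall z, z \in S -> h' z.1 = z.2) (y : seq_sub Y) :
  \prod_(z <- S | val y == z.1) wt (errb h z) <= \sum_b Gy h S y b.
Proof.
rewrite big_bool /=.
have [hy|nhy] := boolP (has (fun z => val y == z.1) S).
  move/hasP: hy => [z0 z0S /eqP y0].
  rewrite (big_rem z0) //= y0 eqxx.
  apply: (@le_trans _ _ (wt (errb h z0))).
    rewrite -[X in _ <= X]mulr1; apply: ler_wpM2l; first exact: wt_ge0.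
    by apply: prodr_ile1 => z _; rewrite wt_ge0 wt_le1.
  have ok : okb h S y (errb h z0).
    apply/allP => z zS; apply/implyP => /eqP z1.
    have e1 : z.1 = z0.1 by rewrite z1 y0.
    have e2 : z.2 = z0.2 by rewrite -(hS z zS) -(hS z0 z0S) e1.
    by rewrite e1 e2 /errb; case: (h z0.1); case: (z0.2).
  rewrite /Gy; case: (errb h z0) ok => ok; rewrite ok.
    by rewrite lerDl; case: ifP => _ //; exact: wt_ge0.
  by rewrite lerDr; case: ifP => _ //; exact: wt_ge0.
rewrite big_hasC // /Gy.
have ok : forall b, okb h S y b.
  move=> b; apply/allP => z zS; apply/implyP => /eqP z1.
  by move/hasPn: nhy => /(_ z zS); rewrite z1 eqxx.
by rewrite !ok wt_sum.
Qed.

Lemma qh_le (Y : seq X) (h h' : X -> bool) (S : dataset X m)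
  (hS : forall z, z \in S -> h' z.1 = z.2) (SY : forall z, z \in S -> z.1 \in Y) :
  qh h S <= \prod_(y : seq_sub Y) \sum_b Gy h S y b.
Proof.
rewrite /qh.
have -> : \prod_(z <- S) wt (errb h z) =
   \prod_(z <- S) \prod_(y : seq_sub Y | val y == z.1) wt (errb h z).
  apply: eq_big_seq => z zS.
  pose y0 : seq_sub Y := SeqSub (SY z zS).
  by rewrite (big_pred1 y0) // => y /=.
rewrite (exchange_big_dep predT) //=.
apply: ler_prod => y _; apply/andP; split.
  by apply: prodr_ge0 => z _; exact: wt_ge0.
have := @factor_bound Y h h' S hS y.
by [].
Qed.


Lemma esum_ge_seq (T : choiceType) (D : set T) (f : T -> R) (r : seq T) :
  uniq r -> (forall x, x \in r -> D x) -> (forall x, x \in r -> 0 <= f x) ->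
  ((\sum_(x <- r) f x)%:E <= \esum_(x in D) (f x)%:E)%E.
Proof.
move=> ur rD f0; apply: esum_ge; exists [set` r].
  by split; [exact: finite_seq | move=> x /= xr; exact: rD].
by rewrite -fsbig_seq // sumEFin.
Qed.

Lemma FH (delta : dataset X m -> R) (hfc : fractional_clique H delta)
  (s : seq (dataset X m)) (us : uniq s)
  (rs : forall S, S \in s -> realizable_ds H S) (h : X -> bool) :
  \sum_(S <- s) delta S * qh h S <= 1.
Proof.
set Y := [seq z.1 | z <- flatten [seq tval t | t <- s]].
have SY : forall S, S \in s -> forall z, z \in S -> z.1 \in Y.
  move=> S Ss z zS; apply/mapP; exists z => //; apply/flattenP.
  by exists (tval S) => //; apply/mapP; exists S.
have d0 : forall S, S \in s -> 0 <= delta S.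
  by move=> S Ss; apply: hfc.1; exact: rs.
pose W (f : {ffun seq_sub Y -> bool}) := \prod_y wt (f y).
have Wsum : \sum_(f : {ffun seq_sub Y -> bool}) W f = 1.
  transitivity (\prod_(y : seq_sub Y) \sum_(b : bool) wt b).
    by rewrite bigA_distr_bigA.
  by rewrite big1 // => y _; rewrite big_bool /= wt_sum.
have W0 : forall f, 0 <= W f by move=> f; apply: prodr_ge0 => y _; exact: wt_ge0.
have Jf : forall f : {ffun seq_sub Y -> bool}, \sum_(S <- s | consb (gf h f) S) delta S <= 1.
  move=> f.
  have -> : \sum_(S <- s | consb (gf h f) S) delta S =
     \sum_(t <- [seq t <- s | consb (gf h f) t]) delta t by rewrite big_filter.
  rewrite -lee_fin.
  have E := @esum_ge_seq _ [set S | S \in [seq t <- s | consb (gf h f) t]]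
     delta _ (filter_uniq (consb (gf h f)) us) (fun _ x => x) (fun S Sf => d0 S (mem_subseq (filter_subseq _ _) Sf)).
  apply: (le_trans E).
  apply: hfc.2; split.
    by move=> S /=; rewrite mem_filter => /andP[_ Ss]; exact: rs.
  move=> S S' /=; rewrite !mem_filter => /andP[cS _] /andP[cS' _].
  move=> [] [x [xS xS']].
    move/allP: cS => /(_ _ xS) /= /eqP e1.
    by move/allP: cS' => /(_ _ xS') /= /eqP; rewrite e1.
  move/allP: cS' => /(_ _ xS) /= /eqP e1.
  by move/allP: cS => /(_ _ xS') /= /eqP; rewrite e1.
have key : forall S, S \in s -> qh h S <= \sum_(f : {ffun seq_sub Y -> bool}) W f * (consb (gf h f) S)%:R.
  move=> S Ss; have [h' _ hS] := realizable_seq (rs S Ss).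
  apply: le_trans (@qh_le Y h h' S hS (SY S Ss)) _.
  rewrite bigA_distr_bigA le_eqVlt; apply/orP; left; apply/eqP.
  apply: eq_bigr => f _.
  exact: (@prodG Y h S (SY S Ss) f).
apply: (@le_trans _ _ (\sum_(S <- s) delta S * \sum_(f : {ffun seq_sub Y -> bool}) W f * (consb (gf h f) S)%:R)).
  rewrite [X in X <= _]big_seq [X in _ <= X]big_seq; apply: ler_sum => S Ss; apply: ler_wpM2l; [exact: d0 | exact: key].
under eq_bigr do rewrite mulr_sumr.
rewrite exchange_big /= -[X in _ <= X]Wsum; apply: ler_sum => f _.
have -> : \sum_(S <- s) delta S * (W f * (consb (gf h f) S)%:R) =
   W f * \sum_(S <- s | consb (gf h f) S) delta S.
  rewrite mulr_sumr [in RHS]big_mkcond /=; apply: eq_bigr => S _.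
  by case: (consb _ _); rewrite ?mulr1 ?mulr0 // mulrC.
by rewrite -[X in _ <= X]mulr1; apply: ler_wpM2l.
Qed.


Lemma qh_ge (h : X -> bool) (S : dataset X m) :
  (4 * count (errb h) S <= m)%N -> (3 ^ (m - m %/ 4))%:R / (4 ^ m)%:R <= qh h S.
Proof.
move=> hE.
set E := count (errb h) S; set G := count (predC (errb h)) S.
have hEG : (E + G = m)%N by rewrite /E /G count_predC size_tuple.
have hEM : (E <= m %/ 4)%N by rewrite leq_divRL // mulnC.
have -> : qh h S = (1/4)^+E * (3/4)^+G.
  rewrite /qh (bigID (errb h)) /=.
  rewrite (eq_bigr (fun=> 1/4)); last by move=> z ->.
  rewrite [X in _ * X](eq_bigr (fun=> 3/4)); last by move=> z /negbTE ->.
  by rewrite !big_const_seq !iter_mulr_1.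
rewrite ler_pdivrMr ?ltr0n ?expn_gt0 //.
have -> : ((4 ^ m)%:R : R) = 4%:R ^+ E * 4%:R ^+ G by rewrite -exprD hEG natrX.
rewrite mulrACA -!exprMn.
have -> : 1/4 * 4%:R = 1 :> R by lra.
have -> : 3/4 * 4%:R = 3%:R :> R by lra.
rewrite expr1n mul1r -natrX ler_nat leq_pexp2l //.
lia.
Qed.


Definition pS (S : dataset X m) (z : X * bool) : R := (count_mem z S)%:R / m%:R.

Lemma pS_sum (S : dataset X m) (Z : seq (X * bool)) (e : pred (X * bool)) :
  uniq Z -> (forall z, z \in Z -> e z) -> (forall z, z \in S -> e z -> z \in Z) ->
  \sum_(z <- Z) pS S z = (count e S)%:R / m%:R.
Proof.
move=> uZ ZE SZ; rewrite /pS -mulr_suml -natr_sum.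
by rewrite (sum_count_mem uZ ZE SZ).
Qed.

Lemma pS_ge0 S z : 0 <= pS S z.
Proof. by rewrite /pS divr_ge0 // ler0n. Qed.

Lemma loss_ge (S : dataset X m) (g : X -> bool) :
  (((count (errb g) S)%:R / m%:R)%:E <= loss (pS S) g)%E.
Proof.
have uZ := undup_uniq [seq z <- S | errb g z].
rewrite /loss -(@pS_sum S _ (errb g) uZ).
- apply: esum_ge_seq => //.
    by move=> z; rewrite mem_undup mem_filter => /andP[].
  by move=> z _; exact: pS_ge0.
- by move=> z; rewrite mem_undup mem_filter => /andP[].
- by move=> z zS ez; rewrite mem_undup mem_filter ez.
Qed.

Lemma pmf_pS (S : dataset X m) : (0 < m)%N -> Defs.pmf (pS S).
Proof.
move=> m0; split; first exact: pS_ge0.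
set Z := undup (tval S).
have uZ : uniq Z := undup_uniq _.
rewrite (eq_esum (b := fun z => if z \in [set` Z] then (pS S z)%:E else 0%E)); last first.
  move=> z _; case: ifPn => // /negP zZ.
  rewrite /pS; suff -> : count_mem z S = 0%N by rewrite mul0r.
  apply/count_memPn; apply/negP => zS; apply: zZ.
  by rewrite in_setE /= mem_undup.
rewrite -esum_mkcond esum_fset; last 2 first.
- exact: finite_seq.
- by move=> z _; rewrite lee_fin; exact: pS_ge0.
rewrite -fsbig_seq // sumEFin (@pS_sum S Z predT uZ) //.
by rewrite count_predT size_tuple divff // pnatr_eq0 -lt0n.
by move=> z zS _; rewrite mem_undup.
Qed.

Lemma real_pS (S : dataset X m) : (0 < m)%N -> realizable_ds H S ->
  realizable_distr H (pS S).
Proof.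
move=> m0 rS; split; first exact: pmf_pS.
have [h' Hh' hS] := realizable_seq rS.
apply/eqP; rewrite eq_le; apply/andP; split.
  apply: ereal_inf_lbound; exists h' => //.
  rewrite /loss esum1 // => z /= nz.
  rewrite /pS; suff -> : count_mem z S = 0%N by rewrite mul0r.
  apply/count_memPn; apply/negP => zS.
  by move: nz; rewrite (hS z zS) eqxx.
apply: le_ereal_inf_tmp => _ [h _ <-].
by apply: esum_ge0 => z _; rewrite lee_fin; exact: pS_ge0.
Qed.


Lemma main_bound (k : nat) (d : measure_display) (Omega : measurableType d)
  (P : probability Omega R) (C : Omega -> 'I_k -> X -> bool)
  (Hrep : forall p : X * bool -> R, realizable_distr H p -> exists A : set Omega,
     [/\ measurable A, A `<=` [set w | exists i : 'I_k, (loss p (C w i) <= (1/4)%:E)%E]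
        & ((3/4)%:E <= P A)%E])
  (m0 : (0 < m)%N) (delta : dataset X m -> R) (hfc : fractional_clique H delta) :
  (\esum_(S in realizable_ds H (m:=m)) (delta S)%:E <=
     (4/3 * (k%:R * ((4 ^ m)%:R / (3 ^ (m - m %/ 4))%:R)))%:E)%E.
Proof.
set Q : R := (4 ^ m)%:R / (3 ^ (m - m %/ 4))%:R.
have Q0 : 0 <= Q by rewrite /Q divr_ge0 // ler0n.
have qh0 : forall h S, 0 <= qh h S.
  by move=> h S; apply: prodr_ge0 => z _; exact: wt_ge0.
have hQ : forall h (S : dataset X m), (4 * count (errb h) S <= m)%N -> 1 <= Q * qh h S.
  move=> h S hc; apply: le_trans (ler_wpM2l Q0 (qh_ge hc)).
  by rewrite /Q mulrA divfK ?divff // pnatr_eq0 expn_eq0.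
have hA : forall S : dataset X m, exists A : set Omega, realizable_ds H S ->
   [/\ measurable A, A `<=` [set w | exists i : 'I_k, (4 * count (errb (C w i)) S <= m)%N]
      & ((3/4)%:E <= P A)%E].
  move=> S; case: (pselect (realizable_ds H S)) => rS; last by exists set0.
  have [A [mA sA PA]] := Hrep _ (real_pS m0 rS).
  exists A => _; split => // w /sA [i li]; exists i.
  have := le_trans (loss_ge S (C w i)) li; rewrite lee_fin ler_pdivrMr ?ltr0n // => hc.
  rewrite -(ler_nat R) natrM; lra.
have [A HA] := choice hA.
pose A' S := if pselect (realizable_ds H S) is left _ then A S else set0.
pose c S := if pselect (realizable_ds H S) is left _ then delta S else 0.
apply: esum_le_seq => s us rs.
have cE : forall S, S \in s -> c S = delta S.
  by move=> S /rs rS; rewrite /c; case: pselect.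
have c0 : forall S, 0 <= c S.
  by move=> S; rewrite /c; case: pselect => [r|_] //; exact: hfc.1.
have mA' : forall S, measurable (A' S).
  by move=> S; rewrite /A'; case: pselect => [r|_] //; have [] := HA S r.
have pw : forall w, \sum_(S <- s) c S * \1_(A' S) w <= k%:R * Q.
  move=> w.
  apply: (@le_trans _ _ (\sum_(S <- s) delta S * (Q * \sum_(i < k) qh (C w i) S))).
    rewrite [X in X <= _]big_seq [X in _ <= X]big_seq; apply: ler_sum => S Ss.
    rewrite (cE S Ss); apply: ler_wpM2l; first exact: hfc.1 (rs S Ss).
    have r := rs S Ss.
    have AE : A' S = A S by rewrite /A'; case: pselect.
    rewrite AE indicE; case: (boolP (w \in A S)) => wA; last first.
      by rewrite mulr_ge0 // sumr_ge0.
    have [_ sA _] := HA S r.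
    have [i hi] := sA w (set_mem wA).
    apply: le_trans (hQ _ _ hi) _.
    apply: (ler_wpM2l Q0).
    by rewrite (bigD1 i) //= lerDl sumr_ge0.
  under eq_bigr do rewrite mulrCA mulr_sumr.
  rewrite -mulr_sumr exchange_big /= mulrC; apply: (ler_wpM2r Q0).
  apply: (@le_trans _ _ (\sum_(i < k) (1 : R))).
    by apply: ler_sum => i _; exact: FH.
  by rewrite sumr_const card_ord.
have hav := avg_bound P c0 mA' pw.
have h34 : ((3/4 * \sum_(S <- s) delta S)%:E <= \sum_(S <- s) (c S)%:E * P (A' S))%E.
  rewrite mulr_sumr -sumEFin [X in (X <= _)%E]big_seq [X in (_ <= X)%E]big_seq.
  apply: lee_sum => S Ss; rewrite (cE S Ss) EFinM muleC.
  apply: lee_wpmul2l; first by rewrite lee_fin; exact: hfc.1 (rs S Ss).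
  have rS := rs S Ss; have [_ _ PA] := HA S rS.
  by rewrite /A'; case: pselect.
have := le_trans h34 hav; rewrite lee_fin => hh.
lra.
Qed.

End Core.

Theorem mainTheorem16 (R : realType) (X : countType) (H : set (X -> bool)) :
  RepDim_finite R H -> CDstar_finite R H.
Proof.
move=> [k [dd [Om [P [C Hrep]]]]].
exists (7 * k ^ 4)%N; move=> m hm.
case: (leqP m (7 * k ^ 4)) => // hlt; exfalso.
have m0 : (0 < m)%N by apply: leq_ltn_trans hlt.
set B : R := 4/3 * (k%:R * ((4 ^ m)%:R / (3 ^ (m - m %/ 4))%:R)).
have hle : (omega_star R H m <= B%:E)%E.
  apply: ge_ereal_sup => _ [delta hfc <-].
  exact: (main_bound Hrep m0 hfc).
rewrite hm lee_fin in hle.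
have ar := arith hlt.
set a := (m - m %/ 4)%N in ar B hle *.
have eB : B = (4 * k * 4 ^ m)%:R / (3 ^ (a + 1))%:R.
  rewrite /B !natrM expnD expn1 natrM.
  field.
  by rewrite pnatr_eq0 expn_eq0.
have hB : B < (2 ^ m)%:R.
  rewrite eB ltr_pdivrMr ?ltr0n ?expn_gt0 // -natrM ltr_nat.
  have -> : (4 ^ m = 2 ^ m * 2 ^ m)%N by rewrite -expnMn.
  have p : (0 < 2 ^ m)%N by rewrite expn_gt0.
  nia.
rewrite natrX in hB.
by move: (lt_le_trans hB hle); rewrite ltxx.
Qed.
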